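(* Let $N\ge2$, let $u\in C(S^{N-1},(0,\infty))$ be nonconstant and separable in $S^{N-1}$, and let $M\in O(N)$ and $h_1>h_2$ in $[-1,1]$ be such that $u_M^{-1}(\max_{S^{N-1}}u_M)=\{x\in S^{N-1}:x_N\ge h_1\}$, $u_M^{-1}(\min_{S^{N-1}}u_M)=\{x\in S^{N-1}:x_N\le h_2\}$, $u_M$ is constant on each set $\{x\in S^{N-1}:x_N=h\}$, and $\alpha\mapsto u_M(0_{N-2},\cos\alpha,\sin\alpha)$ is nonincreasing on $[\pi/2,3\pi/2]$ (such $M$ exists). Let $H$ be an open half-space in $\mathbb{R}^N$ with $0\in\partial H$. Then: (i) if $M^{-1}(0_{N-1},1)\in H$, then $u(x)\ge u(\sigma_Hx)$ for all $x\in H\cap S^{N-1}$; (ii) if $M^{-1}(0_{N-1},1)\in\mathbb{R}^N\setminus\overline{H}$, then $u(x)\le u(\sigma_Hx)$ for all $x\in H\cap S^{N-1}$.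
   Context: $S^{N-1}$ is the unit sphere in $\mathbb{R}^N$ centered at $0$; $O(N)$ is the orthogonal group; for $M\in O(N)$, $u_M(x):=u(M^{-1}x)$; $0_k$ is the zero vector of $\mathbb{R}^k$; $\overline{H}$ is the closure of $H$. $\sigma_H$ denotes reflection across $\partial H$. A function $u\in C(S^{N-1},\mathbb{R})$ is separable in $S^{N-1}$ if for every open half-space $H$ with $0\in\partial H$, either $u(x)\ge u(\sigma_Hx)$ for all $x\in H\cap S^{N-1}$, or $u(x)\le u(\sigma_Hx)$ for all $x\in H\cap S^{N-1}$. *)

(* Defs.v *)
From Stdlib Require Import Reals.
From mathcomp Require Import ssreflect ssrfun ssrbool eqtype ssrnat seq fintype bigop.
Set Implicit Arguments. Unset Strict Implicit. Unset Printing Implicit Defensive.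
Open Scope R_scope.

Definition vec (N : nat) := 'I_N -> R.

Definition dot {N : nat} (x y : vec N) : R := \big[Rplus/0]_(i < N) (x i * y i).

(* coordinate by natural index (0 outside range); x_N of the paper is coord x (N-1) *)
Definition coord {N : nat} (x : vec N) (k : nat) : R :=
  match (insub k : option 'I_N) with Some i => x i | None => 0 end.

Definition on_sphere {N : nat} (x : vec N) : Prop := dot x x = 1.

Definition cont_on_sphere {N : nat} (u : vec N -> R) : Prop :=
  forall x, on_sphere x -> forall eps, 0 < eps -> exists delta, 0 < delta /\
    forall y, on_sphere y ->
      dot (fun i => x i - y i) (fun i => x i - y i) < delta * delta ->
      Rabs (u x - u y) < eps.

(* Open half-spaces H with 0 in boundary H are exactly {x | dot a x > 0}, a <> 0.
   The reflection across boundary H: *)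
Definition in_H {N : nat} (a x : vec N) : Prop := 0 < dot a x.
Definition in_compl_closure_H {N : nat} (a x : vec N) : Prop := dot a x < 0.
Definition refl {N : nat} (a x : vec N) : vec N :=
  fun i => x i - 2 * (dot a x / dot a a) * a i.

Definition separable {N : nat} (u : vec N -> R) : Prop :=
  forall a : vec N, a <> (fun _ => 0) ->
    (forall x, in_H a x -> on_sphere x -> u (refl a x) <= u x) \/
    (forall x, in_H a x -> on_sphere x -> u x <= u (refl a x)).

Definition mat (N : nat) := 'I_N -> 'I_N -> R.
Definition mapp {N : nat} (M : mat N) (x : vec N) : vec N :=
  fun i => \big[Rplus/0]_(j < N) (M i j * x j).
Definition trmat {N : nat} (M : mat N) : mat N := fun i j => M j i.
Definition orthogonal {N : nat} (M : mat N) : Prop :=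
  forall i j : 'I_N,
    \big[Rplus/0]_(k < N) (M k i * M k j) = if i == j then 1 else 0.
(* for orthogonal M, M^{-1} = M^T;  u_M(x) := u(M^{-1} x) *)
Definition rotfun {N : nat} (u : vec N -> R) (M : mat N) : vec N -> R :=
  fun x => u (mapp (trmat M) x).

Definition e_last (N : nat) : vec N := fun i => if val i == (N - 1)%N then 1 else 0.

Definition circpt (N : nat) (al : R) : vec N :=
  fun i => if val i == (N - 2)%N then cos al
           else if val i == (N - 1)%N then sin al else 0.
Arguments e_last N : clear implicits.
Arguments circpt N al : clear implicits.

(* Main.v *)
From HB Require Import structures.
Require Import Defs.
From Stdlib Require Import Reals Lra FunctionalExtensionality.
From mathcomp Require Import ssreflect ssrfun ssrbool eqtype ssrnat seq fintype bigop.
Open Scope R_scope.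
Set Implicit Arguments. Unset Strict Implicit.
HB.instance Definition _ := Monoid.isComLaw.Build R 0 Rplus (fun a b c => esym (Rplus_assoc a b c)) Rplus_comm Rplus_0_l.
Lemma sumD n (F G : 'I_n -> R) : \big[Rplus/0]_(i<n) (F i + G i) = \big[Rplus/0]_(i<n) F i + \big[Rplus/0]_(i<n) G i.
Proof. by rewrite big_split. Qed.
Lemma sumZ n c (F : 'I_n -> R) : \big[Rplus/0]_(i<n) (c * F i) = c * \big[Rplus/0]_(i<n) F i.
Proof. elim: n F => [|n IH] F; first by rewrite !big_ord0 Rmult_0_r.
rewrite !big_ord_recr /= IH. by rewrite Rmult_plus_distr_l. Qed.
Lemma sum_ge0 n (P : pred 'I_n) (F : 'I_n -> R) : (forall i, 0 <= F i) -> 0 <= \big[Rplus/0]_(i<n | P i) F i.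
Proof. move=> H; apply: big_ind => //; [lra | move=> x y; lra]. Qed.
Lemma sum_ge_term n (F : 'I_n -> R) j : (forall i, 0 <= F i) -> F j <= \big[Rplus/0]_(i<n) F i.
Proof. move=> H; rewrite (bigD1 j) //=. have := @sum_ge0 n (fun i => i != j) F H. move=> h; rewrite -{1}(Rplus_0_r (F j)); exact: Rplus_le_compat_l. Qed.
Lemma sum_delta n (F : 'I_n -> R) j : \big[Rplus/0]_(i<n) ((if j == i then 1 else 0) * F i) = F j.
Proof. rewrite (bigD1 j) //= eqxx big1 /=; first lra.
move=> i Hi; rewrite eq_sym (negbTE Hi); lra. Qed.
Lemma dot_comm N (x y : vec N) : dot x y = dot y x.
Proof. by apply: eq_bigr => i _; rewrite Rmult_comm. Qed.
Lemma dot_sub N (x y z : vec N) c : dot x (fun i => y i - c * z i) = dot x y - c * dot x z.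
Proof. rewrite /dot (eq_bigr (fun i => x i * y i + (-c) * (x i * z i))).
  rewrite sumD sumZ; lra.
move=> i _; lra. Qed.
Lemma sq_le_dot N (x : vec N) j : x j * x j <= dot x x.
Proof. apply: (@sum_ge_term N (fun i => x i * x i)) => i. nra. Qed.
Lemma dot_pos N (a : vec N) : a <> (fun _ => 0) -> 0 < dot a a.
Proof. move=> Ha.
have [j Hj] : exists j, a j <> 0.
  apply: Classical_Pred_Type.not_all_not_ex => H; apply: Ha; apply: functional_extensionality => i.
  by apply: Classical_Prop.NNPP.
have := @sq_le_dot N a j. have : 0 < a j * a j by nra. lra. Qed.
Lemma refl_sphere N (a x : vec N) : 0 < dot a a -> on_sphere x -> on_sphere (refl a x).
Proof. rewrite /on_sphere /refl => Ha Hx.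
set c := 2 * (dot a x / dot a a).
rewrite (dot_sub (fun i => x i - c * a i) x a c) (dot_comm _ x) (dot_sub x x a c) (dot_comm (fun i => x i - c * a i) a) (dot_sub a x a c) Hx (dot_comm x a).
rewrite /c. field. lra. Qed.
Lemma dot_refl N (p a x : vec N) : dot p (refl a x) = dot p x - 2 * (dot a x / dot a a) * dot p a.
Proof. by rewrite /refl dot_sub. Qed.
Lemma adj N (M : mat N) x y : dot (mapp M x) y = dot x (mapp (trmat M) y).
Proof. rewrite /dot /mapp /trmat.
rewrite (eq_bigr (fun j => \big[Rplus/0]_(i<N) (y j * (M j i * x i)))); last first.
  by move=> j _; rewrite Rmult_comm -sumZ.
rewrite exchange_big /=. apply: eq_bigr => i _. rewrite -sumZ.
apply: eq_bigr => j _; lra. Qed.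
Lemma MtM N (M : mat N) x : orthogonal M -> mapp (trmat M) (mapp M x) = x.
Proof. move=> HM; apply: functional_extensionality => i.
rewrite /mapp /trmat.
rewrite (eq_bigr (fun j => \big[Rplus/0]_(k<N) (M j i * M j k * x k))); last first.
  by move=> j _; rewrite -sumZ; apply: eq_bigr => k _; lra.
rewrite exchange_big /=.
rewrite (eq_bigr (fun k => ((if i == k then 1 else 0) * x k))) ?sum_delta //.
move=> k _; rewrite -HM. rewrite (Rmult_comm _ (x k)) -sumZ. apply: eq_bigr => j _; lra. Qed.
Lemma M_sphere N (M : mat N) x : orthogonal M -> on_sphere x -> on_sphere (mapp M x).
Proof. move=> HM; rewrite /on_sphere adj MtM //. Qed.
Lemma coord_ord N (x : vec N) (k : 'I_N) : coord x k = x k.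
Proof. rewrite /coord. case: insubP => [i _ Hi|]; last by rewrite ltn_ord.
by congr (x _); apply: val_inj. Qed.
Lemma e_last_img N (M : mat N) (k : 'I_N) : val k = (N - 1)%N ->
  mapp (trmat M) (e_last N) = fun i => M k i.
Proof. move=> Hk; apply: functional_extensionality => i.
rewrite /mapp /trmat /e_last (bigD1 k) //= Hk eqxx big1 /=; first lra.
move=> j Hj. case: eqP => H; last lra.
by case/negP: Hj; apply/eqP/val_inj; rewrite /= H Hk. Qed.
Lemma circ_sphere N al : (2 <= N)%N -> on_sphere (circpt N al).
Proof. case: N => [|[|n]] // _.
have H1 : (n.+1 < n.+2)%N by [].
have H2 : (n < n.+2)%N by apply: leqW.
pose k1 := Ordinal H1. pose k2 := Ordinal H2.
have Hne : k1 != k2.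
  by apply/eqP => /(f_equal val) /= E; move: (n_Sn n); rewrite E.
rewrite /on_sphere /dot (bigD1 k1) //= (bigD1 k2) /=; last by rewrite eq_sym.
rewrite big1 /=.
  rewrite /circpt /= !subSS !subn0 eqxx. have -> : (n.+1 == n)%N = false.
    by apply/negP => /eqP E; move: (n_Sn n); rewrite E.
  have := sin2_cos2 al. rewrite /Rsqr. rewrite eqxx. lra.
move=> i /andP [Hi1 Hi2]. rewrite /circpt !subSS !subn0.
have -> : (val i == n)%N = false by apply/negP => /eqP E; case/negP: Hi2; apply/eqP/val_inj.
have -> : (val i == n.+1)%N = false by apply/negP => /eqP E; case/negP: Hi1; apply/eqP/val_inj.
lra. Qed.
Lemma nat_ne N : (2 <= N)%N -> (N - 1 == N - 2)%N = false.
Proof. case: N => [|[|n]] //= _. rewrite !subSS !subn0. by elim: n. Qed.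
Lemma asin_mono s t : -1 <= s <= 1 -> -1 <= t <= 1 -> t <= s -> asin t <= asin s.
Proof. move=> Hs Ht Hts. apply: Rnot_lt_le => H.
have := asin_bound s; have := asin_bound t => Bt Bs.
have := @sin_increasing_1 _ _ (proj1 Bs) (proj2 Bs) (proj1 Bt) (proj2 Bt) H.
rewrite !sin_asin //. lra. Qed.
Lemma mono N (u : vec N -> R) (M : mat N) (k : 'I_N) :
  (2 <= N)%N -> val k = (N - 1)%N -> orthogonal M ->
  (forall x y, on_sphere x -> on_sphere y -> coord x (N - 1)%N = coord y (N - 1)%N ->
     rotfun u M x = rotfun u M y) ->
  (forall al be, PI / 2 <= al -> al <= be -> be <= 3 * PI / 2 ->
     rotfun u M (circpt N be) <= rotfun u M (circpt N al)) ->
  forall x y, on_sphere x -> on_sphere y ->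
    dot (fun j => M k j) y <= dot (fun j => M k j) x -> u y <= u x.
Proof.
move=> HN Hk HM Hsl Hci.
have key : forall z, on_sphere z -> -1 <= dot (fun j => M k j) z <= 1 /\
   u z = rotfun u M (circpt N (PI - asin (dot (fun j => M k j) z))).
  move=> z Hz. set s := dot (fun j => M k j) z.
  have HZ := M_sphere HM Hz.
  have Hc : coord (mapp M z) (N - 1)%N = s by rewrite -Hk coord_ord.
  have Hs : -1 <= s <= 1.
    have := sq_le_dot (mapp M z) k. rewrite HZ -Hc -Hk coord_ord. nra.
  split => //.
  have -> : u z = rotfun u M (mapp M z) by rewrite /rotfun MtM.
  apply: Hsl => //; first exact: circ_sphere.
  rewrite Hc -Hk coord_ord /circpt Hk nat_ne // eqxx sin_PI_x sin_asin //.
move=> x y Hx Hy Hxy.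
have [Bx ->] := key x Hx. have [By ->] := key y Hy.
have := asin_bound (dot (fun j => M k j) x); have := asin_bound (dot (fun j => M k j) y).
have := asin_mono Bx By Hxy. have := PI_RGT_0 => *.
apply: Hci; lra. Qed.
Unset Implicit Arguments.
Theorem corollary2p3 (N : nat) (u : vec N -> R) (M : mat N) (h1 h2 : R)
  (a : vec N) :
  (2 <= N)%N ->
  cont_on_sphere u ->
  (forall x, on_sphere x -> 0 < u x) ->
  (exists x y, on_sphere x /\ on_sphere y /\ u x <> u y) ->
  separable u ->
  orthogonal M ->
  -1 <= h2 -> h2 < h1 -> h1 <= 1 ->
  (forall x, on_sphere x ->
     ((forall y, on_sphere y -> rotfun u M y <= rotfun u M x)
      <-> h1 <= coord x (N - 1)%N)) ->
  (forall x, on_sphere x ->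
     ((forall y, on_sphere y -> rotfun u M x <= rotfun u M y)
      <-> coord x (N - 1)%N <= h2)) ->
  (forall x y, on_sphere x -> on_sphere y -> coord x (N - 1)%N = coord y (N - 1)%N ->
     rotfun u M x = rotfun u M y) ->
  (forall al be, PI / 2 <= al -> al <= be -> be <= 3 * PI / 2 ->
     rotfun u M (circpt N be) <= rotfun u M (circpt N al)) ->
  a <> (fun _ => 0) ->
  (in_H a (mapp (trmat M) (e_last N)) ->
     forall x, in_H a x -> on_sphere x -> u (refl a x) <= u x) /\
  (in_compl_closure_H a (mapp (trmat M) (e_last N)) ->
     forall x, in_H a x -> on_sphere x -> u x <= u (refl a x)).
Proof.
move=> HN _ _ _ _ HM _ _ _ _ _ Hsl Hci Ha.
have H1 : (N - 1 < N)%N.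
  move: HN; clear; case: N => [|n] // _; by rewrite subSS subn0.
pose k := Ordinal H1. have Hk : val k = (N - 1)%N by [].
rewrite (e_last_img M Hk) /in_H /in_compl_closure_H.
have Haa := dot_pos Ha.
have Hm := @mono N u M k HN Hk HM Hsl Hci.
split => Hp x Hx Hs.
- apply: Hm => //; first exact: refl_sphere.
  rewrite dot_refl (dot_comm _ a).
  have : 0 < dot a x / dot a a by apply: Rdiv_lt_0_compat.
  nra.
- apply: Hm => //; first exact: refl_sphere.
  rewrite dot_refl (dot_comm _ a).
  have : 0 < dot a x / dot a a by apply: Rdiv_lt_0_compat.
  nra.
Qed.
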